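(* Let $(U,\mathcal{S},w,k',p')$ be an instance of the maximization version of $k'$-WEC, and for $1\le i\le k'$ let $\mathcal{S}_i=\{S\in\mathcal{S}:|S|=i\}$. For each $1\le i\le k'$ let $\widehat{\mathcal{S}}_i\subseteq\mathcal{S}_i$ be a subfamily that max represents $\mathcal{S}_i$ with respect to universe $U$, integers $k'$ and $i$, and weight function $w$, and let $\widehat{\mathcal{S}}=\bigcup_{i=1}^{k'}\widehat{\mathcal{S}}_i$. Then $(U,\mathcal{S},w,k',p')$ is a yes-instance if and only if $(U,\widehat{\mathcal{S}},w,k',p')$ is a yes-instance.
   Context: Maximization version of Weighted $k'$-Exact Cover ($k'$-WEC): given a universe $U$, a family $\mathcal{S}$ of nonempty subsets of $U$, a function $w:\mathcal{S}\to\mathbb{R}$, $k'\in\mathbb{N}$ and $p'\in\mathbb{R}$, decide whether there is a subfamily $\mathcal{S}'\subseteq\mathcal{S}$ of pairwise disjoint sets with $|\bigcup\mathcal{S}'|=k'$ and $\sum_{S\in\mathcal{S}'}w(S)\ge p'$. Representation: given a universe $E$, nonnegative integers $k$ and $p$, a family $\mathcal{S}$ of subsets of $E$ of size $p$, and $w:\mathcal{S}\to\mathbb{R}$, a subfamily $\widehat{\mathcal{S}}\subseteq\mathcal{S}$ max represents $\mathcal{S}$ if for every $X\in\mathcal{S}$ and every $Y\subseteq E\setminus X$ with $|Y|\le k-p$ there is $\widehat{X}\in\widehat{\mathcal{S}}$ disjoint from $Y$ with $w(\widehat{X})\ge w(X)$. *)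

(* Defs.v *)
From mathcomp Require Import all_boot all_order all_algebra.
Set Implicit Arguments. Unset Strict Implicit. Unset Printing Implicit Defensive.
Import Order.TTheory GRing.Theory Num.Theory.
Local Open Scope ring_scope.

Definition wec_yes (U : finType) (R : realDomainType)
  (fam : {set {set U}}) (w : {set U} -> R) (k' : nat) (p' : R) : Prop :=
  exists F : {set {set U}},
    [/\ F \subset fam,
        (forall A B, A \in F -> B \in F -> A != B -> [disjoint A & B]),
        #|cover F| = k' &
        p' <= \sum_(S in F) w S].

Definition max_represents (U : finType) (R : realDomainType)
  (k p : nat) (fam famhat : {set {set U}}) (w : {set U} -> R) : Prop :=
  famhat \subset fam /\
  forall X, X \in fam -> forall Y : {set U},
    [disjoint X & Y] -> (#|Y| <= k - p)%N ->
    exists2 Xh, Xh \in famhat & [disjoint Xh & Y] /\ w X <= w Xh.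

Definition fam_size (U : finType) (fam : {set {set U}}) (i : nat) : {set {set U}} :=
  [set S in fam | #|S| == i].

(* Main.v *)
Require Import Defs.
From mathcomp Require Import all_boot all_order all_algebra.
Import Order.TTheory GRing.Theory Num.Theory.
Local Open Scope ring_scope.

Lemma sub_bignat (U : finType) (Shat : nat -> {set {set U}}) a b j :
  (a <= j < b)%N -> Shat j \subset \bigcup_(a <= i < b) Shat i.
Proof.
move=> /andP[aj jb].
rewrite (big_cat_nat _ (n:=j)) //=; last exact: ltnW.
rewrite [\bigcup_(j <= i < b) _]big_ltn //=.
by apply/subsetP=> x Hx; rewrite in_setU in_setU Hx orbT.
Qed.

Lemma bignat_sub (U : finType) (Shat : nat -> {set {set U}}) (fam : {set {set U}}) a b :
  (forall i, (a <= i < b)%N -> Shat i \subset fam) ->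
  \bigcup_(a <= i < b) Shat i \subset fam.
Proof.
move=> H; rewrite big_seq_cond.
elim/big_rec: _ => [|i A /andP[Hi _] HA]; first exact: sub0set.
by rewrite subUset HA andbT; apply: H; rewrite -mem_index_iota.
Qed.

Definition sol {U : finType} {R : realDomainType}
  (fam : {set {set U}}) (w : {set U} -> R) (k' : nat) (p' : R) (F : {set {set U}}) :=
    [/\ F \subset fam,
        (forall A B, A \in F -> B \in F -> A != B -> [disjoint A & B]),
        #|cover F| = k' &
        p' <= \sum_(S in F) w S].

Theorem lemma4 (U : finType) (R : realFieldType)
  (fam : {set {set U}}) (w : {set U} -> R) (k' : nat) (p' : R)
  (Shat : nat -> {set {set U}}) :
  (forall S, S \in fam -> S != set0) ->
  (forall i, (1 <= i <= k')%N ->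
     Shat i \subset fam_size fam i /\
     max_represents k' i (fam_size fam i) (Shat i) w) ->
  wec_yes fam w k' p' <->
  wec_yes (\bigcup_(1 <= i < k'.+1) Shat i) w k' p'.
Proof.
move=> Hne HS.
set Sh := \bigcup_(1 <= i < k'.+1) Shat i.
have ShF : Sh \subset fam.
  apply: bignat_sub => i /andP[i1 ik].
  have [H _] := HS i (introT andP (conj i1 ik)).
  apply: subset_trans H _; apply/subsetP => S; rewrite inE => /andP[]//.
split; last first.
  move=> [F [FS Hd Hc Hw]]; exists F; split=> //; exact: subset_trans FS ShF.
move=> [F0 H0].
suff: forall n F, (#|F :\: Sh| <= n)%N -> sol fam w k' p' F ->
  exists F', sol fam w k' p' F' /\ F' \subset Sh.
  move=> H; have [F' [[_ Hd Hc Hw] FS]] := H _ F0 (leqnn _) H0.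
  by exists F'; split.
elim=> [|n IH] F.
  rewrite leqn0 cards_eq0 setD_eq0 => FS Hs; by exists F.
move=> Hn [FS Hd Hc Hw].
have [FSh|] := boolP (F \subset Sh); first by exists F; split.
case/subsetPn=> X XF XSh.
set G := F :\ X.
set Y := cover G.
have XY : [disjoint X & Y].
  rewrite -setI_eq0; apply/eqP/setP => x; rewrite !inE.
  apply/negbTE/negP => /andP[xX /bigcupP[B]].
  rewrite !inE => /andP[BX BF] xB.
  have := Hd _ _ BF XF BX; rewrite -setI_eq0 => /eqP/setP/(_ x).
  by rewrite !inE xB xX.
have covF : cover F = X :|: Y.
  apply/setP=> x; rewrite !inE; apply/bigcupP/idP.
    move=> [B BF xB]; case: (eqVneq B X) => [<-|BX]; first by rewrite xB.
    by apply/orP; right; apply/bigcupP; exists B; rewrite // !inE BX.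
  case/orP; first by move=> xX; exists X.
  by move=> /bigcupP[B]; rewrite !inE => /andP[_ BF] xB; exists B.
have cardF : #|cover F| = (#|X| + #|Y|)%N.
  by rewrite covF cardsU (disjoint_setI0 XY) cards0 subn0.
have Xfam : X \in fam by apply: (subsetP FS).
have X1 : (1 <= #|X|)%N by rewrite card_gt0; apply: Hne.
have Xk : (#|X| <= k')%N by rewrite -Hc cardF leq_addr.
have [HSi [_ Hrep]] := HS _ (introT andP (conj X1 Xk)).
have Xfs : X \in fam_size fam #|X| by rewrite inE Xfam eqxx.
have [|Xh XhS [XhY wXh]] := Hrep X Xfs Y XY.
  by rewrite -Hc cardF addKn.
have := subsetP HSi _ XhS; rewrite inE => /andP[Xhfam /eqP cXh].
have XhSh : Xh \in Sh by apply: (subsetP (@sub_bignat U Shat 1 k'.+1 #|X| _)) => //; rewrite X1 ltnS.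
have XhX : Xh != X by apply: contraNneq XSh => <-.
have XhG : Xh \notin G.
  apply/negP => XhGG.
  have /set0Pn[x xXh] := Hne _ Xhfam.
  have xY : x \in Y by apply/bigcupP; exists Xh.
  move: XhY; rewrite -setI_eq0 => /eqP/setP/(_ x); by rewrite !inE xXh xY.
apply: (IH (Xh |: G)).
  have : (#|F :\: Sh| = #|(Xh |: G) :\: Sh|.+1)%N.
    rewrite (cardsD1 X (F :\: Sh)) !inE XF XSh /= add1n; congr _.+1.
    apply: eq_card => B; rewrite !inE.
    case: (eqVneq B Xh) => [->|]; first by rewrite XhSh /= andbF.
    by move=> _ /=; rewrite andbCA.
  by move=> E; rewrite E in Hn.
split.
- apply/subsetP => B; rewrite !inE => /orP[/eqP->//|/andP[_ BF]].
  exact: (subsetP FS).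
- move=> A B; rewrite !inE => /orP[/eqP->|/andP[AX AF]] /orP[/eqP->|/andP[BX BF]].
  + by rewrite eqxx.
  + move=> _; apply: (disjointWr _ XhY); apply/subsetP => x xB.
    by apply/bigcupP; exists B; rewrite // !inE BX.
  + move=> _; rewrite disjoint_sym; apply: (disjointWr _ XhY); apply/subsetP => x xA.
    by apply/bigcupP; exists A; rewrite // !inE AX.
  + exact: Hd.
- have -> : cover (Xh |: G) = Xh :|: Y.
    apply/setP=> x; rewrite !inE; apply/bigcupP/idP.
      move=> [B]; rewrite in_setU1 => /orP[/eqP->|BG] xB; first by rewrite xB.
      by apply/orP; right; apply/bigcupP; exists B.
    case/orP; first by move=> xX; exists Xh; rewrite // in_setU1 eqxx.
    by move=> /bigcupP[B BG xB]; exists B; rewrite // in_setU1 BG orbT.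
  rewrite cardsU (disjoint_setI0 XhY) cards0 subn0 cXh -cardF //.
- rewrite big_setU1 //=; apply: le_trans Hw _.
  rewrite (big_setD1 X XF) /=; by rewrite lerD2r.
Qed.
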